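(* Let $(A,\mathcal{A})$, $(B,\mathcal{B})$ be measurable spaces and $j:A\times B\to\mathbb{R}$ a measurable mapping. Let $(\mathfrak{a},\mathfrak{b})$ be an $A\times B$-valued random variable. If $\sigma(j(\mathfrak{a},\mathfrak{b}),\mathfrak{a})$ is independent of $\mathfrak{b}$, then $j(\mathfrak{a},\mathfrak{b})$ is $\sigma(\mathfrak{a})$-measurable. *)

(* Defs.v *)
From HB Require Import structures.
From mathcomp Require Import all_boot all_order all_algebra.
From mathcomp Require Import all_classical all_reals all_analysis.
Set Implicit Arguments. Unset Strict Implicit. Unset Printing Implicit Defensive.
Import Order.TTheory GRing.Theory Num.Theory.
Local Open Scope classical_set_scope.
Local Open Scope ring_scope.

Definition sigma_of {dT} {Omega : Type} {T : measurableType dT}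
  (f : Omega -> T) : set (set Omega) :=
  [set f @^-1` U | U in [set U : set T | measurable U]].

Definition indep_sigma {d} {Omega : measurableType d} {R : realType}
  (P : probability Omega R) (G H : set (set Omega)) : Prop :=
  forall E F, G E -> H F -> P (E `&` F) = (P E * P F)%E.

Definition completion {d} {Omega : measurableType d} {R : realType}
  (P : probability Omega R) (G : set (set Omega)) : set (set Omega) :=
  [set E | exists2 F, G F & P.-negligible ((E `\` F) `|` (F `\` E))].

Definition measurable_wrt {Omega : Type} {R : realType}
  (G : set (set Omega)) (X : Omega -> R) : Prop :=
  forall U : set R, measurable U -> G (X @^-1` U).

(* Main.v *)
Require Import Defs.
From HB Require Import structures.
From mathcomp Require Import all_boot all_order all_algebra.
From mathcomp Require Import all_classical all_reals all_analysis.
From mathcomp Require Import measurable_realfun.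
Import Order.TTheory GRing.Theory Num.Theory.
Local Open Scope classical_set_scope.
Local Open Scope ring_scope.

Lemma int0_negl d (T : measurableType d) (R : realType)
  (mu : {measure set T -> \bar R}) (f : T -> \bar R) :
  measurable_fun setT f -> (forall x, 0 <= f x)%E ->
  (\int[mu]_x f x)%E = 0 -> mu.-negligible [set x | f x != 0].
Proof.
move=> mf f0 If.
have : ae_eq mu setT f (cst 0).
  apply/ae_eq_integral_abs => //.
  by rewrite -If; apply: eq_integral => x _; rewrite gee0_abs.
case=> N [mN N0 sN]; exists N; split => // x /= fx; apply: sN => /=.
by move=> /(_ I) fx0; rewrite fx0 eqxx in fx.
Qed.

Theorem lemma6p1 (R : realType) (d : measure_display) (Omega : measurableType d)
  (P : probability Omega R)
  (dA dB : measure_display) (A : measurableType dA) (B : measurableType dB)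
  (j : A * B -> R) (a : Omega -> A) (b : Omega -> B) :
  measurable_fun setT j ->
  measurable_fun setT (fun w => (a w, b w)) ->
  indep_sigma P (sigma_of (fun w => (j (a w, b w), a w))) (sigma_of b) ->
  measurable_wrt (completion P (sigma_of a)) (fun w => j (a w, b w)).
Proof.
move=> mj mab indep U mU.
set X := fun w => j (a w, b w).
have ma : measurable_fun setT a := measurableT_comp (@measurable_fst _ _ A B) mab.
have mb : measurable_fun setT b := measurableT_comp (@measurable_snd _ _ A B) mab.
have mX : measurable_fun setT X := measurableT_comp mj mab.
have mXa : measurable_fun setT (fun w => (X w, a w)) := measurable_fun_pair mX ma.
have mXab : measurable_fun setT (fun w => ((X w, a w), b w)) :=
  measurable_fun_pair mXa mb.
pose XA : {mfun Omega >-> (R * A)%type} :=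
  HB.pack (fun w => (X w, a w)) (isMeasurableFun.Build _ _ _ _ _ mXa).
pose Bm : {mfun Omega >-> B} := HB.pack b (isMeasurableFun.Build _ _ _ _ _ mb).
pose XAB : {mfun Omega >-> ((R * A) * B)%type} :=
  HB.pack (fun w => ((X w, a w), b w)) (isMeasurableFun.Build _ _ _ _ _ mXab).
pose rho := distribution P XA.
pose nu := distribution P Bm.
pose lam := distribution P XAB.
have hprod : forall D, measurable D -> (rho \x nu)%E D = lam D.
  apply: product_measure_unique => S T mS mT.
  rewrite /lam /rho /nu /distribution /pushforward /=.
  apply: indep; [by exists S | by exists T].
set E := X @^-1` U.
have mE : measurable E by rewrite -[E]setTI; apply: mX.
set C := j @^-1` U.
have mC : measurable C by rewrite -[C]setTI; apply: mj.
pose g := nu \o xsection C.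
have mg : measurable_fun [set: A] (g : A -> \bar R) by exact: measurable_fun_xsection.
pose C0 : set ((R * A) * B)%type := [set p | C (p.1.2, p.2)].
pose C1 : set ((R * A) * B)%type := [set p | U p.1.1 /\ C (p.1.2, p.2)].
have mp : measurable_fun setT (fun p : ((R * A) * B)%type => (p.1.2, p.2)).
  apply: measurable_fun_pair; last exact: measurable_snd.
  exact: measurableT_comp measurable_snd measurable_fst.
have mC0 : measurable C0.
  by rewrite -[C0]setTI; apply: mp.
have mC1 : measurable C1.
  have -> : C1 = ((fst \o fst) @^-1` U) `&` C0 by [].
  apply: measurableI => //; rewrite -[X in measurable X]setTI.
  by apply: (measurableT_comp measurable_fst measurable_fst).
have g01 x : (0 <= g x <= 1)%E.
  apply/andP; split; first exact: measure_ge0.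
  apply: probability_le1.
  exact: measurable_xsection.
have sec0 r x : xsection C0 (r, x) = xsection C x.
  by apply/seteqP; split => y; rewrite /xsection /= !inE.
have sec1 r x : nu (xsection C1 (r, x)) = ((\1_U r)%:E * g x)%E.
  rewrite indicE; case: (boolP (r \in U)) => rU.
    rewrite mul1e /g /=; congr (nu _).
    apply/seteqP; split => y; rewrite /xsection /= !inE //; first by case.
    by move=> ?; split => //; exact: set_mem.
  rewrite (_ : xsection C1 (r, x) = set0) ?measure0; first by rewrite /= mul0e.
  apply/seteqP; split => y; rewrite /xsection /= !inE //.
  by case=> /mem_set; rewrite (negbTE rU).
have I0 : P E = (\int[P]_w g (a w))%E.
  transitivity (lam C0); first by [].
  rewrite -hprod // /product_measure1.
  rewrite ge0_integral_pushforward //; last first.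
    exact: measurable_fun_xsection.
have I1 : P E = (\int[P]_w ((\1_E w)%:E * g (a w)))%E.
  transitivity (lam C1).
    rewrite /lam /distribution /pushforward; congr (P _).
    by apply/seteqP; split => w /=; [move=> Ew; split | case].
  rewrite -hprod // /product_measure1.
  rewrite ge0_integral_pushforward //; last first.
    exact: measurable_fun_xsection.
  by apply: eq_integral => w _ /=; rewrite sec1.
have IE : P E = (\int[P]_w (\1_E w)%:E)%E.
  by rewrite integral_indic // setIT.
have ga0 x : (0 <= g x)%E by case/andP: (g01 x).
have gfin x : g x \is a fin_num.
  by rewrite ge0_fin_numE // (le_lt_trans _ (ltry 1)) //; case/andP: (g01 x).
have PEfin : P E \is a fin_num by apply: fin_num_measure.
pose ind := fun w => ((\1_E w)%:E : \bar R).
have mind : measurable_fun setT ind.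
  by apply/measurable_EFinP; exact: measurable_indic.
have mga : measurable_fun setT (g \o a) := measurableT_comp mg ma.
pose H1 := fun w => (ind w * g (a w))%E.
have mH1 : measurable_fun setT H1 := emeasurable_funM mind mga.
have H1E w : H1 w = if w \in E then g (a w) else 0%E.
  by rewrite /H1 /ind indicE; case: ifP => _; rewrite ?mul1e ?mul0e.
have H10 w : (0 <= H1 w)%E by rewrite H1E; case: ifP.
have H1fin w : H1 w \is a fin_num by rewrite H1E; case: ifP.
pose f1 := fun w => (ind w - H1 w)%E.
pose f2 := fun w => (g (a w) - H1 w)%E.
have mf1 : measurable_fun setT f1 := emeasurable_funB mind mH1.
have mf2 : measurable_fun setT f2 := emeasurable_funB mga mH1.
have f10 w : (0 <= f1 w)%E.
  rewrite /f1 H1E /ind indicE; case: ifP => _ /=; last by rewrite subee.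
  by rewrite sube_ge0 ?gfin //; case/andP: (g01 (a w)).
have f20 w : (0 <= f2 w)%E.
  rewrite /f2 H1E; case: ifP => _; first by rewrite subee.
  by rewrite sube0.
have If1 : (\int[P]_w f1 w)%E = 0.
  have : (\int[P]_w f1 w + \int[P]_w H1 w)%E = P E.
    rewrite -ge0_integralD // IE; apply: eq_integral => w _.
    by rewrite /f1 subeK.
  rewrite -I1 => /(congr1 (fun t => t - P E)%E).
  by rewrite addeK // subee.
have If2 : (\int[P]_w f2 w)%E = 0.
  have : (\int[P]_w f2 w + \int[P]_w H1 w)%E = P E.
    rewrite -ge0_integralD // I0; apply: eq_integral => w _.
    by rewrite /f2 subeK.
  rewrite -I1 => /(congr1 (fun t => t - P E)%E).
  by rewrite addeK // subee.
have N1 := @int0_negl _ _ _ P _ mf1 f10 If1.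
have N2 := @int0_negl _ _ _ P _ mf2 f20 If2.
exists (a @^-1` (g @^-1` [set 1%E])).
  exists (g @^-1` [set 1%E]); last by [].
  by move: (mg measurableT [set 1%E] (emeasurable_set1 _)); rewrite setTI.
apply: (negligibleS _ (negligibleU N1 N2)) => w [[Ew Fw]|[Fw Ew]].
  left => /=; rewrite /f1 H1E /ind indicE mem_set //=.
  have Fw' : g (a w) <> 1%E := Fw.
  move: (gfin (a w)) Fw'; case: (g (a w)) => // r _ Fw'.
  rewrite -EFinB eqe subr_eq0; apply/eqP => r1; apply: Fw'.
  by rewrite -r1.
right => /=; rewrite /f2 H1E memNset // sube0.
by move: Fw => /= ->.
Qed.
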